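(* Let $C$ be a maximal independent set of the Kneser graph $\Gamma$ of flags of type $\{2,3\}$ of $\mathrm{PG}(6,q)$. (i) Every solid $S$ has a subspace $U$ such that for every plane $E$ of $S$: $(E,S)\in C$ if and only if $U\subseteq E$. (ii) For every plane $E$ there is a subspace $U$ containing $E$ such that for every solid $S$ on $E$: $(E,S)\in C$ if and only if $S\subseteq U$.
   Context: Dimensions are projective (planes 2, solids 3). A flag of type $\{2,3\}$ is a pair $(E,S)$ of a plane $E$ and a solid $S$ with $E\subseteq S$; in $\Gamma$ distinct flags $(E,S),(E',S')$ are adjacent iff $E\cap S'=\emptyset$ and $E'\cap S=\emptyset$. Maximal independent means independent and not properly contained in another independent set. *)

(* Defs.v *)
From HB Require Import structures.
From mathcomp Require Import all_boot all_algebra all_field.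
Set Implicit Arguments. Unset Strict Implicit. Unset Printing Implicit Defensive.
Import GRing.Theory.
Local Open Scope ring_scope.

(* PG(n-1,F) is modelled by the vector space 'rV[F]_n; projective subspaces of
   projective dimension d are vector subspaces of dimension d+1.
   Planes: \dim = 3;  solids: \dim = 4.  Projective intersection empty <-> vector
   intersection is 0. *)

Definition is_flag (F : fieldType) (vT : vectType F) (E S : {vspace vT}) : bool :=
  [&& \dim E == 3%N, \dim S == 4%N & (E <= S)%VS].

Definition flag_adjacent (F : fieldType) (vT : vectType F) (E S E' S' : {vspace vT}) : bool :=
  [&& (E, S) != (E', S'), (E :&: S' == 0)%VS & (E' :&: S == 0)%VS].

Definition independent_flags (F : fieldType) (vT : vectType F)
    (C : {vspace vT} -> {vspace vT} -> Prop) : Prop :=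
  (forall E S, C E S -> is_flag E S) /\
  (forall E S E' S', C E S -> C E' S' -> ~~ flag_adjacent E S E' S').

Definition maximal_independent_flags (F : fieldType) (vT : vectType F)
    (C : {vspace vT} -> {vspace vT} -> Prop) : Prop :=
  independent_flags C /\
  (forall D : {vspace vT} -> {vspace vT} -> Prop,
      independent_flags D -> (forall E S, C E S -> D E S) ->
      forall E S, D E S -> C E S).

(* Main.v *)
Require Import Defs.
From HB Require Import structures.
From mathcomp Require Import all_boot all_algebra all_field.
From mathcomp Require Import zify.
From Stdlib Require Import Classical.

Set Implicit Arguments. Unset Strict Implicit. Unset Printing Implicit Defensive.

Ltac dims := repeat match goal with
 | |- context [@dimv ?K ?V ?U] => let a := fresh "d" in set a := (@dimv K V U : nat) in * ; clearbody a
 | H : context [@dimv ?K ?V ?U] |- _ => let a := fresh "d" in set a := (@dimv K V U : nat) in * ; clearbody a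
 end.

Section Aux.
Variables (F : fieldType) (vT : vectType F).

Lemma cap_closure (P : {vspace vT} -> Prop) :
  exists U : {vspace vT}, (forall X, P X -> (U <= X)%VS) /\
    (forall W, (forall X, P X -> (W <= X)%VS) -> (W <= U)%VS).
Proof.
suff H : forall k (U : {vspace vT}), \dim U <= k ->
  (forall W, (forall X, P X -> (W <= X)%VS) -> (W <= U)%VS) ->
  exists U : {vspace vT}, (forall X, P X -> (U <= X)%VS) /\
    (forall W, (forall X, P X -> (W <= X)%VS) -> (W <= U)%VS).
  by apply: (H _ fullv (leqnn _)) => W _; apply: subvf.
elim=> [|k IH] U dU HU.
  exists U; split=> // X _.
  have /eqP -> : U == 0%VS by rewrite -dimv_eq0; dims; lia.
  exact: sub0v.
case: (classic (forall X, P X -> (U <= X)%VS)) => [H|H]; first by exists U.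
have [X HX] := not_all_ex_not _ _ H.
have [PX nUX] : P X /\ ~ (U <= X)%VS.
  split; first (apply: NNPP => nP; apply: HX => /nP []).
  by move=> UX; apply: HX.
apply: (IH (U :&: X)%VS).
  have := dimv_leqif_eq (capvSl U X).
  case=> le /= eqb.
  have : (U :&: X)%VS != U.
    apply/negP => /eqP E; apply: nUX; rewrite -E; exact: capvSr.
  rewrite -eqb => ne.
  have : \dim (U :&: X) < \dim U by rewrite ltn_neqAle ne le.
  dims; lia.
move=> W HW; rewrite subv_cap HU //=; exact: HW.
Qed.

Lemma sum_closure (P : {vspace vT} -> Prop) (U0 : {vspace vT}) :
  exists U : {vspace vT}, (U0 <= U)%VS /\ (forall X, P X -> (X <= U)%VS) /\
    (forall H, (U0 <= H)%VS -> (forall X, P X -> (X <= H)%VS) -> (U <= H)%VS).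
Proof.
suff H : forall k (U : {vspace vT}), dim vT - \dim U <= k -> (U0 <= U)%VS ->
  (forall H, (U0 <= H)%VS -> (forall X, P X -> (X <= H)%VS) -> (U <= H)%VS) ->
  exists U : {vspace vT}, (U0 <= U)%VS /\ (forall X, P X -> (X <= U)%VS) /\
    (forall H, (U0 <= H)%VS -> (forall X, P X -> (X <= H)%VS) -> (U <= H)%VS).
  by apply: (H _ U0 (leqnn _)).
elim=> [|k IH] U dU U0U HU.
  exists U; split=> //; split=> // X _.
  have /eqP -> : U == fullv.
    rewrite eqEdim subvf dimvf; dims; lia.
  exact: subvf.
case: (classic (forall X, P X -> (X <= U)%VS)) => [H|H]; first by exists U.
have [X HX] := not_all_ex_not _ _ H.
have [PX nUX] : P X /\ ~ (X <= U)%VS.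
  split; first (apply: NNPP => nP; apply: HX => /nP []).
  by move=> UX; apply: HX.
apply: (IH (U + X)%VS).
- have := dimv_leqif_eq (addvSl U X).
  case=> le /= eqb.
  have : U != (U + X)%VS.
    apply/negP => /eqP E; apply: nUX; rewrite E; exact: addvSr.
  rewrite -eqb => ne.
  have : \dim U < \dim (U + X) by rewrite ltn_neqAle ne le.
  have := dimvS (subvf (U + X)%VS); rewrite dimvf.
  dims; lia.
- exact: subv_trans U0U (addvSl _ _).
- move=> W HW0 HW; rewrite subv_add HU //=; exact: HW.
Qed.

Lemma flag_adjacent_sym (E S E' S' : {vspace vT}) :
  flag_adjacent E S E' S' = flag_adjacent E' S' E S.
Proof. by rewrite /flag_adjacent eq_sym; congr andb; exact: andbC. Qed.

Lemma not_adj (E S E' S' : {vspace vT}) :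
  (E :&: S' != 0)%VS \/ (E' :&: S != 0)%VS -> ~~ flag_adjacent E S E' S'.
Proof. by rewrite /flag_adjacent; case=> /negbTE ->; rewrite !andbF. Qed.

Lemma dsc (U V : {vspace vT}) :
  (\dim (U + V) + \dim (U :&: V))%N = (\dim U + \dim V)%N.
Proof. exact: dimv_sum_cap. Qed.

Lemma dim_pos (U : {vspace vT}) : (U != 0)%VS = (0 < \dim U).
Proof. by rewrite -dimv_eq0 lt0n. Qed.

End Aux.

Lemma dimf7 (F : fieldType) : \dim (fullv : {vspace 'rV[F]_7}) = 7%N.
Proof. by rewrite dimvf dim_matrix. Qed.

Lemma dimle7 (F : fieldType) (U : {vspace 'rV[F]_7}) : \dim U <= 7.
Proof. have := dimvS (subvf U); by rewrite dimf7. Qed.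

Theorem lemma6p1 (F : finFieldType)
    (C : {vspace 'rV[F]_7} -> {vspace 'rV[F]_7} -> Prop) :
  maximal_independent_flags C ->
  (forall S : {vspace 'rV[F]_7}, \dim S = 4%N ->
     exists U : {vspace 'rV[F]_7},
       forall E : {vspace 'rV[F]_7}, \dim E = 3%N -> (E <= S)%VS ->
         (C E S <-> (U <= E)%VS)) /\
  (forall E : {vspace 'rV[F]_7}, \dim E = 3%N ->
     exists U : {vspace 'rV[F]_7}, (E <= U)%VS /\
       forall S : {vspace 'rV[F]_7}, \dim S = 4%N -> (E <= S)%VS ->
         (C E S <-> (S <= U)%VS)).
Proof.
move=> [[Hflag Hind] Hmax].
have Hfl : forall E S, C E S -> [/\ \dim E = 3%N, \dim S = 4%N & (E <= S)%VS].
  by move=> E S /Hflag /and3P [/eqP -> /eqP -> ->].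
have add : forall E S, is_flag E S ->
    (forall E' S', C E' S' -> ~~ flag_adjacent E S E' S') -> C E S.
  move=> E S fES HES.
  pose D := fun E0 S0 => C E0 S0 \/ (E0 = E /\ S0 = S).
  apply: (Hmax D); last by right.
  - split.
    + by move=> E0 S0 [/Hflag|[-> ->]].
    + move=> E1 S1 E2 S2 [H1|[-> ->]] [H2|[-> ->]].
      * exact: Hind.
      * rewrite flag_adjacent_sym; exact: HES.
      * exact: HES.
      * by rewrite /flag_adjacent eqxx.
  - by move=> E0 S0 H; left.
split.
- move=> S dS.
  have [U [HU1 HU2]] := cap_closure (fun X => C X S).
  exists U => E dE ES; split; first exact: HU1.
  move=> UE; apply: add; first by rewrite /is_flag dE dS ES !eqxx.
  move=> E' S' HC'.
  have [dE' dS' E'S'] := Hfl _ _ HC'.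
  case: (eqVneq (E' :&: S)%VS 0%VS) => [E'S0|E'S0]; last by apply: not_adj; right.
  apply: not_adj; left; rewrite dim_pos.
  pose W := (S :&: S')%VS.
  have dW : 0 < \dim W.
    have := dsc S S'; rewrite dS dS'; have := dimle7 (S + S')%VS; rewrite /W. move=> h1 h2. set a := (dimv (S+S')%VS : nat) in h1 h2 *. lia.
  have HX : forall X, C X S -> (X :&: S' != 0)%VS.
    move=> X HX; have [dX _ XS] := Hfl _ _ HX.
    have := Hind _ _ _ _ HX HC'.
    rewrite /flag_adjacent E'S0 eqxx andbT negb_and negbK.
    case/orP => [/eqP [eX eS]|//].
    move: E'S0; rewrite -eX -eS (capv_idPl XS) => X0.
    by move: dX; rewrite X0 dimv0.
  case: (leqP 2 (\dim W)) => dW2.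
    have := dsc E W.
    have := dimvS (_ : (E + W <= S)%VS).
    have := dimvS (_ : (E :&: W <= E :&: S')%VS).
    have h1 : (E :&: W <= E :&: S')%VS by apply: capvS => //; exact: capvSr.
    have h2 : (E + W <= S)%VS by rewrite subv_add ES capvSl.
    move=> /(_ h1) ? /(_ h2) ?; dims; lia.
  have WU : (W <= U)%VS.
    apply: HU2 => X HXS.
    have [dX _ XS] := Hfl _ _ HXS.
    have sub : (X :&: S' <= W)%VS by apply: capvS.
    have := HX _ HXS; rewrite dim_pos => pos.
    have /eqP eq : (X :&: S')%VS == W by rewrite eqEdim sub; dims; lia.
    by rewrite -eq capvSl.
  have : (W <= E :&: S')%VS.
    by rewrite subv_cap (subv_trans WU UE) capvSr.
  move/dimvS; dims; lia.
- move=> E dE.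
  have [U [EU [HU1 HU2]]] := sum_closure (fun X => C E X) E.
  exists U; split => // S dS ES; split; first exact: HU1.
  move=> SU; apply: add; first by rewrite /is_flag dE dS ES !eqxx.
  move=> E' S' HC'.
  have [dE' dS' E'S'] := Hfl _ _ HC'.
  case: (eqVneq (E :&: S')%VS 0%VS) => [ES0|ES0]; last by apply: not_adj; left.
  apply: not_adj; right.
  pose H := (E + E')%VS.
  have EE0 : \dim (E :&: E') = 0%N.
    apply/eqP; rewrite dimv_eq0 -subv0 -ES0; apply: capvS => //.
  have dH : \dim H = 6%N by have := dsc E E'; rewrite /H; dims; lia.
  have HX : forall X, C E X -> (X <= H)%VS.
    move=> X HXS; have [_ dX EX] := Hfl _ _ HXS.
    have := Hind _ _ _ _ HXS HC'.
    rewrite /flag_adjacent ES0 eqxx /= negb_and negbK.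
    case/orP => [/eqP [eE eS]|].
      by move: ES0 dE; rewrite eE (capv_idPl E'S') => ->; rewrite dimv0.
    rewrite dim_pos => pos.
    have sub : (H <= X + E')%VS by rewrite /H subv_add (subv_trans EX (addvSl _ _)) addvSr.
    have := dsc X E'; rewrite capvC.
    have := dimvS sub => ? ?.
    have /eqP eq : H == (X + E')%VS by rewrite eqEdim sub; dims; lia.
    by rewrite eq addvSl.
  have UH : (U <= H)%VS by apply: HU2 => //; exact: addvSl.
  have SE'H : (S + E' <= H)%VS by rewrite subv_add (subv_trans SU UH) addvSr.
  have := dimvS SE'H; have := dsc S E'; rewrite capvC dim_pos; dims; lia.
Qed.
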